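(* Let $r\ge3$, $n>r$. In $T$ define $\zeta(T_{\rho^{-1}})=(F_nF_{n-1}\cdots F_{r+1})(F_1F_2\cdots F_r)1_\omega$ and $\zeta(T_\rho)=(E_rE_{r+1}\cdots E_{n-1})(E_{r-1}E_{r-2}\cdots E_1)E_n1_\omega$. Then $\zeta(T_{\rho^{-1}})\zeta(T_\rho)=1_\omega$ and $\zeta(T_\rho)\zeta(T_{\rho^{-1}})=1_\omega$.
   Context: $T$ is the $\mathbb{Q}(v)$-algebra with generators $E_i,F_i,K_i^{\pm1}$ ($1\le i\le n$, indices mod $n$) and relations: $K_iK_j=K_jK_i$; $K_iK_i^{-1}=K_i^{-1}K_i=1$; $K_iE_j=v^{\epsilon^+(i,j)}E_jK_i$; $K_iF_j=v^{-\epsilon^+(i,j)}F_jK_i$ ($\epsilon^+(i,j)=1$ if $j=i$, $-1$ if $j\equiv i-1\pmod n$, $0$ otherwise); $E_iF_j-F_jE_i=\delta_{ij}\frac{K_iK_{i+1}^{-1}-K_i^{-1}K_{i+1}}{v-v^{-1}}$; $E_iE_j=E_jE_i$, $F_iF_j=F_jF_i$ if $i-j\not\equiv\pm1$; $E_i^2E_j-(v+v^{-1})E_iE_jE_i+E_jE_i^2=0$, $F_i^2F_j-(v+v^{-1})F_iF_jF_i+F_jF_i^2=0$ if $i-j\equiv\pm1\pmod n$; $K_1\cdots K_n=v^r$; $\prod_{j=0}^r(K_i-v^j)=0$. For a composition $\lambda$ of $r$ into $n$ nonnegative parts, $1_\lambda=\prod_{i=1}^n\prod_{s=1}^{\lambda_i}\frac{K_iv^{-s+1}-K_i^{-1}v^{s-1}}{v^s-v^{-s}}$;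 $\omega=(1,\dots,1,0,\dots,0)$ with $r$ ones and $n-r$ zeros. *)

(* Defs.v *)
From HB Require Import structures.
From mathcomp Require Import all_boot all_order all_algebra.
Set Implicit Arguments. Unset Strict Implicit. Unset Printing Implicit Defensive.
Import Order.TTheory GRing.Theory Num.Theory.
Local Open Scope ring_scope.

Definition Qv : fieldType := {fraction {poly rat}}.
Definition v : Qv := tofrac 'X.

(* Indices are 1..n, taken mod n. *)
Definition nxt (n i : nat) : nat := if i == n then 1%N else i.+1.
Definition adj (n i j : nat) : bool :=
  (i %% n == j.+1 %% n)%N || (j %% n == i.+1 %% n)%N.
Definition epsp (n i j : nat) : int :=
  if i == j then 1 else if (j.+1 %% n == i %% n)%N then -1 else 0.

(* T is the algebra presented by these
   generators and relations; an identity holds in T iff it holds for every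
   family of elements satisfying the relations in every Q(v)-algebra. *)
Record Trels (n r : nat) (A : algType Qv) (E F K Ki : nat -> A) : Prop := {
  rK_comm : forall i j, (1 <= i <= n)%N -> (1 <= j <= n)%N -> K i * K j = K j * K i;
  rK_inv1 : forall i, (1 <= i <= n)%N -> K i * Ki i = 1;
  rK_inv2 : forall i, (1 <= i <= n)%N -> Ki i * K i = 1;
  rKE : forall i j, (1 <= i <= n)%N -> (1 <= j <= n)%N ->
      K i * E j = (v ^ epsp n i j) *: (E j * K i);
  rKF : forall i j, (1 <= i <= n)%N -> (1 <= j <= n)%N ->
      K i * F j = (v ^ (- epsp n i j)) *: (F j * K i);
  rEF : forall i j, (1 <= i <= n)%N -> (1 <= j <= n)%N ->
      E i * F j - F j * E i =
      (if i == j then (v - v^-1)^-1 *: (K i * Ki (nxt n i) - Ki i * K (nxt n i))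
       else 0);
  rEE : forall i j, (1 <= i <= n)%N -> (1 <= j <= n)%N -> ~~ adj n i j ->
      E i * E j = E j * E i;
  rFF : forall i j, (1 <= i <= n)%N -> (1 <= j <= n)%N -> ~~ adj n i j ->
      F i * F j = F j * F i;
  rEserre : forall i j, (1 <= i <= n)%N -> (1 <= j <= n)%N -> adj n i j ->
      E i * E i * E j - (v + v^-1) *: (E i * E j * E i) + E j * E i * E i = 0;
  rFserre : forall i j, (1 <= i <= n)%N -> (1 <= j <= n)%N -> adj n i j ->
      F i * F i * F j - (v + v^-1) *: (F i * F j * F i) + F j * F i * F i = 0;
  rKprod : \prod_(1 <= i < n.+1) K i = (v ^+ r)%:A;
  rKpoly : forall i, (1 <= i <= n)%N ->
      \prod_(0 <= j < r.+1) (K i - (v ^+ j)%:A) = 0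
}.

(* 1_lambda for a composition lambda (given as a function on 1..n) *)
Definition oneL (n : nat) (A : algType Qv) (K Ki : nat -> A) (lam : nat -> nat) : A :=
  \prod_(1 <= i < n.+1) \prod_(1 <= s < (lam i).+1)
     ((v ^+ s - v ^- s)^-1 *:
        (v ^ (1 - (s%:Z)) *: K i - v ^ ((s%:Z) - 1) *: Ki i)).

Definition omega (r : nat) (i : nat) : nat := if (i <= r)%N then 1%N else 0%N.

Definition zeta_rhoinv (n r : nat) (A : algType Qv) (F K Ki : nat -> A) : A :=
  (\prod_(0 <= k < n - r) F (n - k)%N) * (\prod_(1 <= i < r.+1) F i)
  * oneL n K Ki (omega r).

Definition zeta_rho (n r : nat) (A : algType Qv) (E K Ki : nat -> A) : A :=
  (\prod_(r <= i < n) E i) * (\prod_(0 <= k < r.-1) E (r.-1 - k)%N) * E n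
  * oneL n K Ki (omega r).

(* Main.v *)
Require Import Defs.
From HB Require Import structures.
From mathcomp Require Import all_boot all_order all_algebra.
From mathcomp Require Import zify.
Import GRing.Theory.
Set Implicit Arguments. Unset Strict Implicit. Unset Printing Implicit Defensive.
Local Open Scope ring_scope.

Lemma v_inj (a b : nat) : v ^+ a = v ^+ b -> a = b.
Proof.
rewrite /v -!rmorphXn /= => /eqP; rewrite tofrac_eq => /eqP H.
by have := congr1 (fun p : {poly rat} => size p) H; rewrite /= !size_polyXn => -[].
Qed.
Lemma v_neq0 : v != 0.
Proof. apply/eqP=> H. by have := @v_inj 1 2; rewrite expr1 H expr2 mul0r => /(_ erefl). Qed.
Lemma vX_neq0 a : v ^+ a != 0.
Proof. by rewrite expf_neq0 // v_neq0. Qed.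

Section Main.
Variables (r n : nat) (A : algType Qv) (E F K Ki : nat -> A).
Hypothesis hr : (3 <= r)%N.
Hypothesis hn : (r < n)%N.
Hypothesis hT : Trels n r E F K Ki.

Definition comm' (z : A) := forall i, (1 <= i <= n)%N -> z * K i = K i * z /\ z * Ki i = Ki i * z.
Definition cart (x : A) := forall z, comm' z -> x * z = z * x.

Lemma KiK i j : (1 <= i <= n)%N -> (1 <= j <= n)%N -> Ki i * K j = K j * Ki i.
Proof.
move=> Hi Hj.
by rewrite -[LHS]mulr1 -(rK_inv1 hT Hi) mulrA -(mulrA (Ki i)) (rK_comm hT Hj Hi) mulrA (rK_inv2 hT Hi) mul1r.
Qed.

Lemma KiKi i j : (1 <= i <= n)%N -> (1 <= j <= n)%N -> Ki i * Ki j = Ki j * Ki i.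
Proof.
move=> Hi Hj.
rewrite -[LHS]mul1r -(rK_inv2 hT Hj) -mulrA (mulrA (K j)) -(KiK Hi Hj).
by rewrite -mulrA (rK_inv1 hT Hj) mulr1.
Qed.

Lemma comm'K j : (1 <= j <= n)%N -> comm' (K j).
Proof. by move=> Hj i Hi; split; [rewrite (rK_comm hT Hj Hi) | rewrite (KiK Hi Hj)]. Qed.
Lemma comm'Ki j : (1 <= j <= n)%N -> comm' (Ki j).
Proof. by move=> Hj i Hi; split; [rewrite (KiK Hj Hi) | rewrite (KiKi Hj Hi)]. Qed.

Lemma cartK j : (1 <= j <= n)%N -> cart (K j).
Proof. by move=> Hj z Hz; case: (Hz j Hj). Qed.
Lemma cartKi j : (1 <= j <= n)%N -> cart (Ki j).
Proof. by move=> Hj z Hz; case: (Hz j Hj). Qed.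
Lemma cart1 : cart 1.
Proof. by move=> z _; rewrite mul1r mulr1. Qed.
Lemma cartD x y : cart x -> cart y -> cart (x + y).
Proof. by move=> Hx Hy z Hz; rewrite mulrDl mulrDr Hx // Hy. Qed.
Lemma cartN x : cart x -> cart (- x).
Proof. by move=> Hx z Hz; rewrite mulNr mulrN Hx. Qed.
Lemma cartB x y : cart x -> cart y -> cart (x - y).
Proof. by move=> Hx Hy; apply: cartD => //; apply: cartN. Qed.
Lemma cartM x y : cart x -> cart y -> cart (x * y).
Proof. by move=> Hx Hy z Hz; rewrite -mulrA Hy // mulrA Hx // mulrA. Qed.
Lemma cartZ k x : cart x -> cart (k *: x).
Proof. by move=> Hx z Hz; rewrite -scalerAl Hx // scalerAr. Qed.
Lemma cartA k : cart (k%:A).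
Proof. exact/cartZ/cart1. Qed.
Lemma cart0 : cart 0.
Proof. by move=> z _; rewrite mul0r mulr0. Qed.
Lemma cart_prod (I : eqType) (s : seq I) (f : I -> A) :
  (forall i, i \in s -> cart (f i)) -> cart (\prod_(i <- s) f i).
Proof.
elim: s => [|a s IH] H; first by rewrite big_nil; apply: cart1.
rewrite big_cons; apply: cartM; first by apply: H; rewrite inE eqxx.
by apply: IH => i Hi; apply: H; rewrite inE Hi orbT.
Qed.
Lemma cart_sum (I : eqType) (s : seq I) (f : I -> A) :
  (forall i, i \in s -> cart (f i)) -> cart (\sum_(i <- s) f i).
Proof.
elim: s => [|a s IH] H; first by rewrite big_nil; apply: cart0.
rewrite big_cons; apply: cartD; first by apply: H; rewrite inE eqxx.
by apply: IH => i Hi; apply: H; rewrite inE Hi orbT.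
Qed.
Lemma cart_comm' x : cart x -> comm' x.
Proof.
move=> Hx i Hi; split; first by rewrite Hx //; apply: comm'K.
by rewrite Hx //; apply: comm'Ki.
Qed.
Lemma cartC x y : cart x -> cart y -> x * y = y * x.
Proof. by move=> Hx Hy; rewrite Hx //; apply: cart_comm'. Qed.


Definition supp (X y : A) (s : seq nat) := (\prod_(a <- s) (X - (v ^+ a)%:A)) * y = 0.

Lemma eig_prod (X y : A) (c : Qv) (I : Type) (s : seq I) (f : I -> Qv) :
  X * y = c *: y -> (\prod_(a <- s) (X - (f a)%:A)) * y = (\prod_(a <- s) (c - f a)) *: y.
Proof.
move=> H; elim: s => [|a s IH]; first by rewrite !big_nil mul1r scale1r.
rewrite !big_cons -mulrA IH -scalerAr mulrBl H mulr_algl -scalerBl scalerA.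
by rewrite mulrC.
Qed.

Lemma decomp (X : A) (s : seq nat) : cart X -> uniq s -> forall y, supp X y s ->
  exists Q : nat -> A, [/\ \sum_(a <- s) Q a * y = y,
     forall a, a \in s -> X * (Q a * y) = v ^+ a *: (Q a * y) &
     forall a, cart (Q a)].
Proof.
move=> HX; elim: s => [|a s IH] /= Hu y Hs.
  exists (fun _ => 0); split => //; last by move=> _; apply: cart0.
  by move: Hs; rewrite /supp big_nil mul1r big_nil => ->.
case/andP: Hu => Ha Hu.
set z := (X - (v ^+ a)%:A) * y.
have Hz : supp X z s.
  rewrite /supp /z mulrA (cartC (cart_prod (fun i _ => cartB HX (cartA _))) (cartB HX (cartA _))).
  by move: Hs; rewrite /supp big_cons.
have [Q' [Hsum Heig Hc]] := IH Hu z Hz.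
pose c b := (v ^+ b - v ^+ a)^-1.
have Hc0 : forall b, b \in s -> (v ^+ b - v ^+ a) != 0.
  move=> b Hb; rewrite subr_eq0; apply/eqP => /v_inj Hab.
  by move: Ha; rewrite -Hab Hb.
pose Q b := if b == a then 1 - \sum_(b' <- s) c b' *: (Q' b' * (X - (v^+a)%:A))
            else c b *: (Q' b * (X - (v^+a)%:A)).
have HQs : forall b, b \in s -> Q b * y = c b *: (Q' b * z).
  move=> b Hb; rewrite /Q.
  have /negbTE -> : b != a by apply: contraNneq Ha => <-.
  by rewrite -scalerAl -mulrA.
have Hw : Q a * y = y - \sum_(b <- s) c b *: (Q' b * z).
  rewrite /Q eqxx mulrBl mul1r mulr_suml; congr (_ - _); apply: eq_bigr => b _.
  by rewrite -scalerAl -mulrA.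
exists Q; split.
- rewrite big_cons Hw (eq_big_seq _ HQs) /=; exact: subrK.
- move=> a0; rewrite inE; case/orP => [/eqP -> | Ha0].
    apply/eqP; rewrite -subr_eq0 -mulr_algl -mulrBl Hw mulrBr mulr_sumr.
    rewrite (eq_big_seq (fun b => Q' b * z)) ?Hsum ?subrr //.
    move=> b Hb; rewrite -scalerAr mulrBl Heig // mulr_algl -scalerBl scalerA.
    by rewrite /c mulVf ?scale1r // Hc0.
  by rewrite HQs // -scalerAr Heig // !scalerA mulrC.
- move=> b; rewrite /Q; case: ifP => _.
    apply: cartB; first exact: cart1.
    apply: cart_sum => i _; apply: cartZ; apply: cartM => //; exact: cartB HX (cartA _).
  apply: cartZ; apply: cartM => //; exact: cartB HX (cartA _).
Qed.


Lemma supp_mul (X Y y : A) (I J L : seq nat) : cart X -> cart Y -> uniq I -> uniq J ->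
  supp X y I -> supp Y y J -> (forall a b, a \in I -> b \in J -> (a + b)%N \in L) ->
  supp (X * Y) y L.
Proof.
move=> HX HY HI HJ HsX HsY HL.
have [Q [Hsum Heig Hc]] := decomp HX HI HsX.
rewrite /supp -Hsum mulr_sumr big1_seq // => a /andP [_ Ha].
have Hya : supp Y (Q a * y) J.
  rewrite /supp mulrA (cartC (cart_prod (fun i _ => cartB HY (cartA _))) (Hc a)).
  by rewrite -mulrA HsY mulr0.
have [Q' [Hsum' Heig' Hc']] := decomp HY HJ Hya.
rewrite -Hsum' mulr_sumr big1_seq // => b /andP [_ Hb].
have HXw : X * (Q' b * (Q a * y)) = v ^+ a *: (Q' b * (Q a * y)).
  by rewrite mulrA (cartC HX (Hc' b)) -mulrA Heig // -scalerAr.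
have HXY : X * Y * (Q' b * (Q a * y)) = v ^+ (a + b) *: (Q' b * (Q a * y)).
  by rewrite -mulrA Heig' // -scalerAr HXw scalerA -exprD addnC.
rewrite (eig_prod _ _ HXY); apply/eqP; rewrite scaler_eq0; apply/orP; left.
rewrite prodf_seq_eq0; apply/hasP; exists (a + b)%N; first exact: HL.
by rewrite subrr eqxx.
Qed.

Lemma pin (X R y : A) (sR : seq nat) (m a l : nat) : cart X -> cart R -> uniq sR ->
  supp R y sR -> (forall c, c \in sR -> m <= c)%N -> supp X y (iota a l) ->
  X * (R * y) = v ^+ (m + a) *: y -> X * y = v ^+ a *: y.
Proof.
move=> HX HR Hu HsR Hm HsX HXR.
have [Q [Hsum Heig Hc]] := decomp HR Hu HsR.
rewrite -Hsum mulr_sumr scaler_sumr; apply: eq_big_seq => c Hc'.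
have H1 : X * (R * (Q c * y)) = v ^+ (m + a) *: (Q c * y).
  rewrite (mulrA R) (cartC HR (Hc c)) -mulrA (mulrA X) (cartC HX (Hc c)) -mulrA HXR.
  by rewrite -scalerAr.
have H2 : v ^+ c *: (X * (Q c * y)) = v ^+ (m + a) *: (Q c * y).
  by rewrite scalerAr -Heig.
have Hmc := Hm c Hc'.
case: (ltngtP m c) => Hmc'; last 2 first.
- by lia.
- subst c; apply: (scalerI (vX_neq0 m)); rewrite H2 scalerA -exprD.
  by [].
have H3 : X * (Q c * y) = (v ^+ (m + a) / v ^+ c) *: (Q c * y).
  apply: (scalerI (vX_neq0 c)); rewrite H2 scalerA mulrC divfK //; exact: vX_neq0.
have H4 : supp X (Q c * y) (iota a l).
  rewrite /supp mulrA (cartC (cart_prod (fun i _ => cartB HX (cartA _))) (Hc c)).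
  by rewrite -mulrA HsX mulr0.
move: H4; rewrite /supp (eig_prod _ _ H3) => /eqP; rewrite scaler_eq0 prodf_seq_eq0.
case/orP => [/hasP [j Hj /andP [_ Hj0]] | /eqP ->]; last by rewrite mulr0 scaler0.
exfalso; move: Hj0; rewrite subr_eq0 => /eqP /(congr1 (fun t => t * v ^+ c)).
rewrite divfK ?vX_neq0 // -exprD => /v_inj.
by move: Hj; rewrite mem_iota; lia.
Qed.

Lemma supp_prod (f : nat -> A) (ls : seq nat) (y : A) (lo len : nat) :
  (forall i, i \in ls -> cart (f i) /\ supp (f i) y (iota lo len)) ->
  supp (\prod_(i <- ls) f i) y (iota (size ls * lo) (size ls * len).+1).
Proof.
elim: ls => [|i ls IH] H.
  by rewrite big_nil /supp /= big_cons big_nil mulr1 expr0 scale1r subrr mul0r.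
have [Hci Hsi] := H i (mem_head _ _).
have H' : forall j, j \in ls -> cart (f j) /\ supp (f j) y (iota lo len).
  by move=> j Hj; apply: H; rewrite inE Hj orbT.
rewrite big_cons; apply: (supp_mul Hci (cart_prod (fun j Hj => (H' j Hj).1)) (iota_uniq _ _) (iota_uniq _ _) Hsi (IH H')).
move=> a b; rewrite !mem_iota /= !mulSn; lia.
Qed.

Lemma prod_rem (f : nat -> A) (ls : seq nat) (a : nat) :
  (forall i, i \in ls -> cart (f i)) -> a \in ls ->
  \prod_(i <- ls) f i = f a * \prod_(i <- rem a ls) f i.
Proof.
elim: ls => [|b ls IH] H //= Ha.
rewrite big_cons; case: eqP => [-> //| Hne].
have Ha' : a \in ls by move: Ha; rewrite inE => /orP [/eqP Eq|//]; case: Hne.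
rewrite big_cons IH // ; last by move=> i Hi; apply: H; rewrite inE Hi orbT.
rewrite mulrA (cartC (H b (mem_head _ _)) (H a _)) -?mulrA //.
Qed.


Definition om (i : nat) : bool := (i <= r)%N.
Definition wt (S : nat -> bool) (y : A) :=
  forall i, (1 <= i <= n)%N -> K i * y = (if S i then v else 1) *: y.
Definition inner (i : nat) : A := \prod_(1 <= s < (omega r i).+1)
     ((v ^+ s - v ^- s)^-1 *:
        (v ^ (1 - (s%:Z)) *: K i - v ^ ((s%:Z) - 1) *: Ki i)).
Definition e : A := oneL n K Ki (omega r).
Lemma eE : e = \prod_(1 <= i < n.+1) inner i.
Proof. by []. Qed.

Lemma vmv_neq0 : v - v^-1 != 0.
Proof.
rewrite subr_eq0; apply/eqP => H.
have : v * v = v * v^-1 by rewrite {2}H.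
rewrite mulfV ?v_neq0 // -expr2 -(expr0 v) => /v_inj.
by [].
Qed.

Lemma inner_le i : (i <= r)%N -> inner i = (v - v^-1)^-1 *: (K i - Ki i).
Proof.
move=> Hi; rewrite /inner /omega Hi big_nat1 expr1 subrr expr0z !scale1r.
by [].
Qed.

Lemma inner_gt i : (r < i)%N -> inner i = 1.
Proof.
move=> Hi; rewrite /inner /omega.
have -> : (i <= r)%N = false by apply/negbTE; rewrite -ltnNge.
by rewrite big_geq.
Qed.

Lemma cart_inner i : (1 <= i <= n)%N -> cart (inner i).
Proof.
move=> Hi; apply: cart_prod => s _; apply: cartZ; apply: cartB; apply: cartZ.
  exact: cartK.
exact: cartKi.
Qed.

Lemma Ki_eig i y c : (1 <= i <= n)%N -> c != 0 -> K i * y = c *: y -> Ki i * y = c^-1 *: y.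
Proof.
move=> Hi Hc H.
have H2 : c *: (Ki i * y) = y by rewrite scalerAr -H mulrA (rK_inv2 hT Hi) mul1r.
by rewrite -{2}H2 scalerA mulVf // scale1r.
Qed.

Lemma prod_fix (f : nat -> A) (ls : seq nat) (y : A) :
  (forall i, i \in ls -> f i * y = y) -> (\prod_(i <- ls) f i) * y = y.
Proof.
elim: ls => [|a ls IH] H; first by rewrite big_nil mul1r.
rewrite big_cons -mulrA IH; first by apply: H; rewrite inE eqxx.
by move=> i Hi; apply: H; rewrite inE Hi orbT.
Qed.

Lemma e_fix y : wt om y -> e * y = y.
Proof.
move=> Hy; rewrite eE; apply: prod_fix => i; rewrite mem_index_iota => Hi.
have Hi' : (1 <= i <= n)%N by lia.
case: (leqP i r) => Hir; last by rewrite inner_gt // mul1r.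
have Hv : K i * y = v *: y by rewrite Hy // /om Hir.
rewrite inner_le // -scalerAl mulrBl Hv.
rewrite (Ki_eig Hi' v_neq0 Hv) -scalerBl scalerA mulVf ?scale1r //.
exact: vmv_neq0.
Qed.


Lemma wt_e : wt om e.
Proof.
have Hr0 : (0 < r)%N by lia.
have Hpoly : forall i y, (1 <= i <= n)%N -> supp (K i) y (iota 0 r.+1).
  move=> i y Hi; rewrite /supp; have := rKpoly hT Hi; rewrite /index_iota subn0 => ->.
  by rewrite mul0r.
have HsLo : forall i, (1 <= i <= r)%N -> supp (K i) e (iota 1 r).
  move=> i Hi; have Hi' : (1 <= i <= n)%N by lia.
  rewrite /supp eE (@prod_rem inner _ i); first last.
  - by rewrite mem_index_iota; lia.
  - by move=> j; rewrite mem_index_iota => Hj; apply: cart_inner; lia.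
  rewrite mulrA; suff -> : (\prod_(a <- iota 1 r) (K i - (v ^+ a)%:A)) * inner i = 0.
    by rewrite mul0r.
  rewrite inner_le; last by lia.
  rewrite -scalerAr; suff -> : (\prod_(a <- iota 1 r) (K i - (v ^+ a)%:A)) * (K i - Ki i) = 0.
    by rewrite scaler0.
  have HW : K i - Ki i = (K i - 1) * (Ki i * (K i + 1)).
    rewrite mulrDr mulr1 (rK_inv2 hT Hi') mulrBl mul1r mulrDr mulr1 (rK_inv1 hT Hi').
    by rewrite opprD addrA addrK.
  rewrite HW mulrA.
  rewrite -(cartC (cartB (cartK Hi') cart1) (cart_prod (fun j _ => cartB (cartK Hi') (cartA _)))).
  have := rKpoly hT Hi'; rewrite /index_iota subn0 /= big_cons expr0 scale1r => ->.
  by rewrite mul0r.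
set P := \prod_(i <- iota 1 r) K i.
set Q := \prod_(i <- iota r.+1 (n - r)) K i.
have cP : cart P by apply: cart_prod => i; rewrite mem_iota => Hi; apply: cartK; lia.
have cQ : cart Q by apply: cart_prod => i; rewrite mem_iota => Hi; apply: cartK; lia.
have HPQ : P * Q = (v ^+ r)%:A.
  have := rKprod hT; rewrite /index_iota subSS subn0 -{1}(subnKC (ltnW hn)) iotaD big_cat /=.
  by rewrite add1n.
have HsP : supp P e (iota (r * 1) (r * r).+1).
  have := @supp_prod K (iota 1 r) e 1 r; rewrite size_iota; apply => i; rewrite mem_iota => Hi.
  by split; [apply: cartK; lia | apply: HsLo; lia].
have HsQ : supp Q e (iota ((n - r) * 0) ((n - r) * r.+1).+1).
  have := @supp_prod K (iota r.+1 (n - r)) e 0 r.+1; rewrite size_iota; apply => i; rewrite mem_iota => Hi.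
  by split; [apply: cartK; lia | apply: Hpoly; lia].
have HQe : Q * e = e.
  have H0 : Q * e = v ^+ 0 *: e.
    apply: (pin (m:=r) (l:=((n - r) * r.+1).+1) cQ cP (iota_uniq _ _) HsP).
    - by move=> c; rewrite mem_iota; lia.
    - by move: HsQ; rewrite muln0.
    - by rewrite mulrA (cartC cQ cP) HPQ mulr_algl addn0.
  by rewrite expr0 scale1r in H0.
have HPe : P * e = v ^+ r *: e by rewrite -{1}HQe mulrA HPQ mulr_algl.
move=> i Hi; case: (leqP i r) => Hir.
  rewrite /om Hir /=.
  set ls := rem i (iota 1 r).
  have Hils : i \in iota 1 r by rewrite mem_iota; lia.
  have Hsz : size ls = r.-1 by rewrite size_rem // size_iota.
  have Hmem : forall j, j \in ls -> (1 <= j <= r)%N.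
    by move=> j /mem_rem; rewrite mem_iota; lia.
  have HsR : supp (\prod_(j <- ls) K j) e (iota (size ls * 1) (size ls * r).+1).
    by apply: supp_prod => j /Hmem Hj; split; [apply: cartK; lia | exact: HsLo].
  have HPi : P = K i * \prod_(j <- ls) K j.
    by apply: prod_rem => // j; rewrite mem_iota => Hj; apply: cartK; lia.
  have cR : cart (\prod_(j <- ls) K j) by apply: cart_prod => j /Hmem Hj; apply: cartK; lia.
  have H1 : K i * e = v ^+ 1 *: e.
    apply: (pin (m := r.-1) (cartK Hi) cR (iota_uniq _ _) HsR).
    - by move=> c; rewrite mem_iota Hsz; lia.
    - by apply: HsLo; lia.
    - by rewrite mulrA -HPi HPe addn1 prednK.
  by rewrite H1 expr1.
have -> : om i = false by rewrite /om; apply/negbTE; rewrite -ltnNge.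
set ls := rem i (iota r.+1 (n - r)).
have Hils : i \in iota r.+1 (n - r) by rewrite mem_iota; lia.
have Hmem : forall j, j \in ls -> (r < j <= n)%N.
  by move=> j /mem_rem; rewrite mem_iota; lia.
have HsR : supp (\prod_(j <- ls) K j) e (iota (size ls * 0) (size ls * r.+1).+1).
  by apply: supp_prod => j /Hmem Hj; split; [apply: cartK; lia | apply: Hpoly; lia].
have HQi : Q = K i * \prod_(j <- ls) K j.
  by apply: prod_rem => // j; rewrite mem_iota => Hj; apply: cartK; lia.
have H0 : K i * e = v ^+ 0 *: e.
  apply: (pin (m := 0) (cartK Hi) _ (iota_uniq _ _) HsR).
  - by apply: cart_prod => j /Hmem Hj; apply: cartK; lia.
  - by [].
  - by apply: Hpoly.
  - by rewrite mulrA -HQi HQe expr0 scale1r.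
by rewrite expr0 in H0.
Qed.


Lemma n2 : (2 <= n)%N. Proof. lia. Qed.

Lemma nxt_rng k : (1 <= k <= n)%N -> (1 <= nxt n k <= n)%N.
Proof. rewrite /nxt; case: eqP => H; lia. Qed.

Lemma epsp_eq i j : (1 <= i <= n)%N -> (1 <= j <= n)%N ->
  epsp n i j = if i == j then 1 else if i == nxt n j then -1 else 0.
Proof.
move=> Hi Hj; rewrite /epsp; case: eqP => // Hij.
have Hmi : (i %% n = if i == n then 0 else i)%N.
  by case: eqP => [->|H]; [rewrite modnn | rewrite modn_small; lia].
have Hmj : (j.+1 %% n = if j == n then 1 else if j.+1 == n then 0 else j.+1)%N.
  case: eqP => [->|H1]; first by rewrite -addn1 modnDl modn_small; lia.
  by case: eqP => [->|H2]; [rewrite modnn | rewrite modn_small; lia].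
have -> : (j.+1 %% n == i %% n)%N = (i == nxt n j).
  rewrite Hmi Hmj /nxt; repeat case: ifP => ?; lia.
by [].
Qed.

Lemma KE i j y c : (1 <= i <= n)%N -> (1 <= j <= n)%N -> K i * y = c *: y ->
  K i * (E j * y) = (v ^ epsp n i j * c) *: (E j * y).
Proof.
move=> Hi Hj H.
by rewrite mulrA (rKE hT Hi Hj) -scalerAl -mulrA H -scalerAr scalerA.
Qed.

Lemma KF i j y c : (1 <= i <= n)%N -> (1 <= j <= n)%N -> K i * y = c *: y ->
  K i * (F j * y) = (v ^ (- epsp n i j) * c) *: (F j * y).
Proof.
move=> Hi Hj H.
by rewrite mulrA (rKF hT Hi Hj) -scalerAl -mulrA H -scalerAr scalerA.
Qed.

Lemma zero_of i z : (1 <= i <= n)%N -> K i * z = v^-1 *: z -> z = 0.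
Proof.
move=> Hi H.
have := eig_prod (iota 0 r.+1) (fun j => v ^+ j) H.
have := rKpoly hT Hi; rewrite /index_iota subn0 => ->; rewrite mul0r => /esym /eqP.
rewrite scaler_eq0 prodf_seq_eq0 => /orP [/hasP [j _ /andP [_ Hj0]] | /eqP //].
exfalso; move: Hj0; rewrite subr_eq0 => /eqP /(congr1 (fun t => t * v)).
rewrite mulVf ?v_neq0 // -exprSr -(expr0 v) => /v_inj.
by [].
Qed.

Lemma FE_lem S k y : wt S y -> (1 <= k <= n)%N -> S k = false -> S (nxt n k) = true ->
  F k * (E k * y) = y.
Proof.
move=> Hy Hk Hs1 Hs2.
have Hj := nxt_rng Hk.
have HF : F k * y = 0.
  apply: (zero_of Hk); rewrite (KF Hk Hk (Hy k Hk)) epsp_eq // eqxx Hs1 mulr1.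
  by rewrite exprN1.
have := rEF hT Hk Hk; rewrite eqxx => /eqP; rewrite subr_eq => /eqP HEF.
have HKk : K k * y = 1 *: y by rewrite Hy // Hs1.
have HKj : K (nxt n k) * y = v *: y by rewrite Hy // Hs2.
have HFE : F k * E k = E k * F k - (v - v^-1)^-1 *: (K k * Ki (nxt n k) - Ki k * K (nxt n k)).
  by rewrite HEF (addrC (_ *: _)) addrK.
rewrite mulrA HFE.
rewrite mulrBl -mulrA HF mulr0 sub0r -scalerAl mulrBl -!mulrA.
rewrite (Ki_eig Hj v_neq0 HKj) HKj -!scalerAr (Ki_eig Hk (oner_neq0 _) HKk) HKk.
rewrite invr1 !scale1r -scalerBl scalerA -[v^-1 - v]opprB mulrN mulVf ?vmv_neq0 //.
by rewrite scaleN1r opprK.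
Qed.


Lemma EF_lem S k y : wt S y -> (1 <= k <= n)%N -> S k = true -> S (nxt n k) = false ->
  E k * (F k * y) = y.
Proof.
move=> Hy Hk Hs1 Hs2.
have Hj := nxt_rng Hk.
have Hnk : (nxt n k == k) = false by apply/negbTE; rewrite /nxt; case: (k =P n) => [->|H]; lia.
have HE : E k * y = 0.
  apply: (zero_of Hj); rewrite (KE Hj Hk (Hy _ Hj)) epsp_eq // Hnk eqxx Hs2 mulr1.
  by rewrite exprN1.
have := rEF hT Hk Hk; rewrite eqxx => /eqP; rewrite subr_eq => /eqP HEF.
have HKk : K k * y = v *: y by rewrite Hy // Hs1.
have HKj : K (nxt n k) * y = 1 *: y by rewrite Hy // Hs2.
rewrite mulrA HEF mulrDl -mulrA HE mulr0 addr0 -scalerAl mulrBl -!mulrA.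
rewrite (Ki_eig Hj (oner_neq0 _) HKj) HKj -!scalerAr (Ki_eig Hk v_neq0 HKk) HKk.
rewrite invr1 !scale1r -scalerBl scalerA mulVf ?vmv_neq0 //.
by rewrite scale1r.
Qed.

Lemma wtE S S' j y : wt S y -> (1 <= j <= n)%N -> S j = false -> S (nxt n j) = true ->
  (forall i, (1 <= i <= n)%N -> S' i = if i == j then true else if i == nxt n j then false else S i) ->
  wt S' (E j * y).
Proof.
move=> Hy Hj Hs1 Hs2 HS i Hi.
rewrite (KE Hi Hj (Hy i Hi)) epsp_eq // HS //.
case: eqP => [->|Hij]; first by rewrite Hs1 expr1z mulr1.
case: eqP => [->|Hin]; first by rewrite Hs2 exprN1 mulVf ?v_neq0.
by rewrite expr0z mul1r.
Qed.

Lemma wtF S S' j y : wt S y -> (1 <= j <= n)%N -> S j = true -> S (nxt n j) = false ->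
  (forall i, (1 <= i <= n)%N -> S' i = if i == j then false else if i == nxt n j then true else S i) ->
  wt S' (F j * y).
Proof.
move=> Hy Hj Hs1 Hs2 HS i Hi.
rewrite (KF Hi Hj (Hy i Hi)) epsp_eq // HS //.
case: eqP => [->|Hij]; first by rewrite Hs1 exprN1 mulVf ?v_neq0.
case: eqP => [->|Hin]; first by rewrite Hs2 opprK expr1z mulr1.
by rewrite oppr0 expr0z mul1r.
Qed.

Lemma EFcomm i j : (1 <= i <= n)%N -> (1 <= j <= n)%N -> i != j -> E i * F j = F j * E i.
Proof.
move=> Hi Hj Hij; have := rEF hT Hi Hj; rewrite (negbTE Hij) => /eqP; rewrite subr_eq0.
by move/eqP.
Qed.

Lemma prod_comm (s1 s2 : seq nat) (f g : nat -> A) :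
  (forall a b, a \in s1 -> b \in s2 -> f a * g b = g b * f a) ->
  (\prod_(a <- s1) f a) * (\prod_(b <- s2) g b) = (\prod_(b <- s2) g b) * (\prod_(a <- s1) f a).
Proof.
move=> H.
have H1 : forall a, a \in s1 -> f a * (\prod_(b <- s2) g b) = (\prod_(b <- s2) g b) * f a.
  move=> a Ha; elim: s2 H => [|b s2 IH] H; first by rewrite big_nil mul1r mulr1.
  rewrite big_cons mulrA H ?mem_head // -!mulrA IH //.
  by move=> x y Hx Hy; apply: H => //; rewrite inE Hy orbT.
elim: s1 H H1 => [|a s1 IH] H H1; first by rewrite big_nil mul1r mulr1.
rewrite big_cons -mulrA IH; last 2 first.
- by move=> x y Hx Hy; apply: H => //; rewrite inE Hx orbT.
- by move=> x Hx; apply: H1; rewrite inE Hx orbT.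
by rewrite !mulrA H1 ?mem_head.
Qed.


Lemma wt_ext S S' y : (forall i, (1 <= i <= n)%N -> S i = S' i) -> wt S y -> wt S' y.
Proof. by move=> H Hy i Hi; rewrite -H // Hy. Qed.

Lemma nxt_cases x : ((x == n) && (nxt n x == 1%N)) || ((x != n) && (nxt n x == x.+1)).
Proof. by rewrite /nxt; case: eqP => _ /=. Qed.

Ltac gen_nxt := repeat match goal with |- context [nxt n ?x] =>
  let y := fresh "y" in have := nxt_cases x; move: (nxt n x) => y end.
Ltac btac := rewrite /= /om; gen_nxt; move=> *; repeat case: ifP => ?; lia.
Ltac wtac := let i := fresh "i" in let Hi := fresh "Hi" in move=> i Hi; btac.

Lemma chainC k : (k <= r.-1)%N ->
  wt (fun i => ((i <= k) || (k.+2 <= i <= r) || (i == n))%N)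
     ((\prod_(0 <= t < k) E (k - t)%N) * (E n * e)) /\
  (\prod_(1 <= i < k.+1) F i) * ((\prod_(0 <= t < k) E (k - t)%N) * (E n * e)) = E n * e.
Proof.
have Hn : (1 <= n <= n)%N by lia.
elim: k => [|k IH] Hk.
  rewrite !big_geq // !mul1r; split => //.
  by apply: (wtE wt_e Hn); [btac | btac | wtac].
have [IHw IHe] := IH (ltnW Hk).
rewrite big_nat_recl // subn0.
rewrite (eq_bigr (fun t => E (k - t)%N)); last by move=> t _; rewrite subSS.
rewrite -mulrA.
set y := (\prod_(0 <= t < k) E (k - t)%N) * (E n * e).
have Hk1 : (1 <= k.+1 <= n)%N by lia.
split.
  by apply: (wtE IHw Hk1); [btac | btac | wtac].
rewrite big_nat_recr // -mulrA (FE_lem IHw Hk1) //; btac.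
Qed.


Lemma chainU x m : wt (fun i => ((i <= r.-1) || (i == n))%N) x -> (m <= n - r - 1)%N ->
  wt (fun i => ((i <= r.-1) || (i == n - m))%N) ((\prod_(n - m <= i < n) E i) * x).
Proof.
move=> Hx; elim: m => [|m IH] Hm.
  by rewrite subn0 big_geq // mul1r.
rewrite big_ltn; last lia.
have -> : (n - m.+1).+1 = (n - m)%N by lia.
rewrite -mulrA; apply: (wtE (IH (ltnW Hm))); [lia | btac | btac | wtac].
Qed.

Lemma chainD m : (m <= n - r)%N ->
  wt (fun i => ((2 <= i <= r) || (if m == 0 then i == 1 else i == (n - m).+1))%N)
     ((\prod_((n - m).+1 <= i < n.+1) E i) * e) /\
  (\prod_(0 <= k < m) F (n - k)%N) * ((\prod_((n - m).+1 <= i < n.+1) E i) * e) = e.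
Proof.
elim: m => [|m IH] Hm.
  rewrite subn0 !big_geq // !mul1r; split => //; apply: (wt_ext _ wt_e); wtac.
have [IHw IHe] := IH (ltnW Hm).
have -> : (n - m.+1).+1 = (n - m)%N by lia.
rewrite big_ltn; last lia.
have Hj : (1 <= n - m <= n)%N by lia.
rewrite -mulrA; split.
  by apply: (wtE IHw Hj); [btac | btac | wtac].
rewrite big_nat_recr // -mulrA (FE_lem IHw Hj) //; btac.
Qed.

Lemma prod1 : zeta_rhoinv n r F K Ki * zeta_rho n r E K Ki = e.
Proof.
rewrite /zeta_rhoinv /zeta_rho -/e.
have Hr1 : (1 <= r <= n)%N by lia.
have Hr0 : (0 < r)%N by lia.
have [Cw Ce] := chainC (leqnn r.-1).
rewrite prednK // in Ce.
have HFlo : \prod_(1 <= i < r.+1) F i = (\prod_(1 <= i < r) F i) * F r by rewrite big_nat_recr.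
rewrite [\prod_(r <= i < n) E i]big_ltn // HFlo.
rewrite -!mulrA.
set x := (\prod_(0 <= t < r.-1) E (r.-1 - t)%N) * (E n * e).
have Cw' : wt (fun i => ((i <= r.-1) || (i == n))%N) x by apply: (wt_ext _ Cw); wtac.
have Ux := chainU Cw' (leqnn (n - r - 1)).
have Hnr : (n - (n - r - 1) = r.+1)%N by lia.
rewrite Hnr in Ux.
set W := (\prod_(r.+1 <= i < n) E i) * x.
have wEr : wt om (E r * W) by apply: (wtE Ux Hr1); [btac | btac | wtac].
rewrite (e_fix wEr) (FE_lem Ux Hr1); [| btac | btac].
rewrite /W (mulrA (\prod_(1 <= i < r) F i)) (prod_comm (f := F) (g := E)); last first.
  move=> a b; rewrite !mem_index_iota => Ha Hb; apply/esym/EFcomm; lia.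
rewrite -mulrA Ce.
have := (chainD (leqnn (n - r))).2; rewrite subKn ?(ltnW hn) // big_nat_recr // -mulrA.
by [].
Qed.


Lemma chainG k : (k <= r.-1)%N -> forall u,
  wt (fun i => ((i <= k) || (k.+2 <= i <= r.+1))%N) u ->
  wt (fun i => (2 <= i <= r.+1)%N) ((\prod_(1 <= i < k.+1) F i) * u) /\
  (\prod_(0 <= t < k) E (k - t)%N) * ((\prod_(1 <= i < k.+1) F i) * u) = u.
Proof.
elim: k => [|k IH] Hk u Hu.
  rewrite !big_geq // !mul1r; split => //; apply: (wt_ext _ Hu); wtac.
have Hk1 : (1 <= k.+1 <= n)%N by lia.
have Hu' : wt (fun i => ((i <= k) || (k.+2 <= i <= r.+1))%N) (F k.+1 * u).
  by apply: (wtF Hu Hk1); [btac | btac | wtac].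
have [IHw IHe] := IH (ltnW Hk) _ Hu'.
have HF : \prod_(1 <= i < k.+2) F i = (\prod_(1 <= i < k.+1) F i) * F k.+1 by rewrite big_nat_recr.
rewrite HF -mulrA; split => //.
rewrite big_nat_recl // subn0 (eq_bigr (fun t => E (k - t)%N)); last by move=> t _; rewrite subSS.
rewrite -mulrA IHe (EF_lem Hu Hk1) //; btac.
Qed.

Lemma chainFw m : (m <= n - r - 1)%N -> forall u,
  wt (fun i => ((2 <= i <= r) || (i == n - m))%N) u ->
  wt (fun i => ((2 <= i <= r) || (i == n))%N) ((\prod_(1 <= k < m.+1) F (n - k)%N) * u).
Proof.
elim: m => [|m IH] Hm u Hu.
  by rewrite big_geq // mul1r; apply: (wt_ext _ Hu); wtac.
have Hj : (1 <= n - m.+1 <= n)%N by lia.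
have Hu' : wt (fun i => ((2 <= i <= r) || (i == n - m))%N) (F (n - m.+1)%N * u).
  by apply: (wtF Hu Hj); [btac | btac | wtac].
have HF : \prod_(1 <= k < m.+2) F (n - k)%N = (\prod_(1 <= k < m.+1) F (n - k)%N) * F (n - m.+1)%N.
  by rewrite big_nat_recr.
by rewrite HF -mulrA; apply: IH => //; lia.
Qed.

Lemma chainH m : (m <= n - r)%N -> forall u,
  wt (fun i => ((1 <= i <= r.-1) || (i == n - m))%N) u ->
  (\prod_(n - m <= i < n) E i) * ((\prod_(1 <= k < m.+1) F (n - k)%N) * u) = u.
Proof.
elim: m => [|m IH] Hm u Hu.
  by rewrite subn0 !big_geq // !mul1r.
have Hj : (1 <= n - m.+1 <= n)%N by lia.
have Hu' : wt (fun i => ((1 <= i <= r.-1) || (i == n - m))%N) (F (n - m.+1)%N * u).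
  by apply: (wtF Hu Hj); [btac | btac | wtac].
have HF : \prod_(1 <= k < m.+2) F (n - k)%N = (\prod_(1 <= k < m.+1) F (n - k)%N) * F (n - m.+1)%N.
  by rewrite big_nat_recr.
rewrite HF -mulrA big_ltn; last lia.
have -> : (n - m.+1).+1 = (n - m)%N by lia.
rewrite -mulrA (IH (ltnW Hm) _ Hu') (EF_lem Hu Hj) //; btac.
Qed.

Lemma prod2 : zeta_rho n r E K Ki * zeta_rhoinv n r F K Ki = e.
Proof.
rewrite /zeta_rhoinv /zeta_rho -/e.
have Hr1 : (1 <= r <= n)%N by lia.
have Hr0 : (0 < r)%N by lia.
have Hn1 : (1 <= n <= n)%N by lia.
have HFlo : \prod_(1 <= i < r.+1) F i = (\prod_(1 <= i < r) F i) * F r by rewrite big_nat_recr.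
have HFhi : \prod_(0 <= k < n - r) F (n - k)%N = F n * \prod_(1 <= k < n - r) F (n - k)%N.
  by rewrite big_ltn ?subn0 //; lia.
rewrite HFlo HFhi -!mulrA.
have wFr : wt (fun i => ((i <= r.-1) || (r.-1.+2 <= i <= r.+1))%N) (F r * e).
  by apply: (wtF wt_e Hr1); [btac | btac | wtac].
have [Gw Ge] := chainG (leqnn r.-1) wFr.
rewrite prednK // in Gw Ge.
have Gw' : wt (fun i => ((2 <= i <= r) || (i == n - (n - r - 1)))%N)
              (\prod_(1 <= i < r) F i * (F r * e)).
  by apply: (wt_ext _ Gw); wtac.
have Fw := chainFw (leqnn (n - r - 1)) Gw'.
have Hnr : (n - r - 1).+1 = (n - r)%N by lia.
rewrite Hnr in Fw.
have wFn : wt om (F n * (\prod_(1 <= k < n - r) F (n - k)%N * (\prod_(1 <= i < r) F i * (F r * e)))).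
  by apply: (wtF Fw Hn1); [btac | btac | wtac].
rewrite (e_fix wFn) (EF_lem Fw Hn1); [| btac | btac].
rewrite (mulrA (\prod_(0 <= k < r.-1) E (r.-1 - k)%N)) prod_comm; last first.
  move=> a b; rewrite !mem_index_iota => Ha Hb; apply: EFcomm; lia.
rewrite -mulrA Ge.
have we : wt (fun i => ((1 <= i <= r.-1) || (i == n - (n - r)))%N) e.
  by apply: (wt_ext _ wt_e); wtac.
have HH := chainH (leqnn (n - r)) we.
have HFr : \prod_(1 <= k < (n - r).+1) F (n - k)%N = (\prod_(1 <= k < n - r) F (n - k)%N) * F (n - (n - r))%N.
  by rewrite big_nat_recr //; lia.
rewrite HFr subKn ?(ltnW hn) // -mulrA in HH.
by [].
Qed.

End Main.

Theorem lemma2p3p5 (r n : nat) (hr : (3 <= r)%N) (hn : (r < n)%N)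
  (A : algType Qv) (E F K Ki : nat -> A) (hT : Trels n r E F K Ki) :
  zeta_rhoinv n r F K Ki * zeta_rho n r E K Ki = oneL n K Ki (omega r) /\
  zeta_rho n r E K Ki * zeta_rhoinv n r F K Ki = oneL n K Ki (omega r).
Proof.
split; [exact: (prod1 hr hn hT) | exact: (prod2 hr hn hT)].
Qed.
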